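(* Let $\varphi(x)=\sum_{i\ge0}\gamma_ix^i\in\mathbb{K}[[x]]$ and let $r$ be an even integer. If $r<0$, assume $\gamma_i=0$ for each $i\le -r$. Stipulating $\gamma_i=0$ for $i<0$, the $\gamma_i$ satisfy $$\sum_{i=0}^{m-1}(-1)^i\binom{m-1}{i}\gamma_{m-r+i}=0$$ for each $m\ge1$ if and only if $\varphi\in\mathcal{F}_r$.
   Context: $\mathbb{K}\in\{\mathbb{Q},\mathbb{R},\mathbb{C}\}$. For $r\in\mathbb{Z}$, $\mathcal{F}_r$ denotes the space of $\varphi\in\mathbb{K}[[x]]$ with $\varphi(x/(x-1))=(1-x)^r\varphi(x)$. *)

(* Defs.v *)
From mathcomp Require Import all_boot all_order all_algebra.
Set Implicit Arguments. Unset Strict Implicit. Unset Printing Implicit Defensive.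
Import Order.TTheory GRing.Theory Num.Theory.
Local Open Scope ring_scope.

Definition fps (K : numFieldType) := nat -> K.

Section FPS.
Variable K : numFieldType.

Definition fps_const (c : K) : fps K := fun n => if n is 0 then c else 0.
Definition fps_X : fps K := fun n => if n == 1%N then 1 else 0.
Definition fps_add (f g : fps K) : fps K := fun n => f n + g n.
Definition fps_mul (f g : fps K) : fps K :=
  fun n => \sum_(i < n.+1) f i * g (n - i)%N.
Definition fps_pow (f : fps K) (k : nat) : fps K :=
  iter k (fps_mul f) (fps_const 1).

(* composition phi(s(x)), meaningful when s has zero constant term:
   the coefficient of x^n only involves phi_i s^i for i <= n *)
Definition fps_comp (phi s : fps K) : fps K :=
  fun n => \sum_(i < n.+1) phi i * fps_pow s i n.

Definition one_minus_X : fps K := fps_add (fps_const 1) (fun n => - fps_X n).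
Definition X_minus_one : fps K := fps_add fps_X (fps_const (-1)).

(* F_r : phi(x/(x-1)) = (1-x)^r phi(x).  Here s ranges over series with
   (x-1) s = x, i.e. s = x/(x-1) (unique).  For r < 0 the identity
   phi(s) = (1-x)^r phi is written in the equivalent multiplied-out form
   (1-x)^(-r) phi(s) = phi, since (1-x) is invertible. *)
Definition in_F (r : int) (phi : fps K) : Prop :=
  forall s : fps K, fps_mul X_minus_one s = fps_X ->
    if (0 <= r) then fps_comp phi s = fps_mul (fps_pow one_minus_X `|r|%N) phi
    else fps_mul (fps_pow one_minus_X `|r|%N) (fps_comp phi s) = phi.

Definition coefz (phi : fps K) (z : int) : K :=
  match z with Posz n => phi n | Negz _ => 0 end.

End FPS.

(* Main.v *)
Require Import Defs.
From mathcomp Require Import all_boot all_order all_algebra.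
From mathcomp Require Import ring zify.
From Stdlib Require Import FunctionalExtensionality.
Set Implicit Arguments. Unset Strict Implicit. Unset Printing Implicit Defensive.
Import Order.TTheory GRing.Theory Num.Theory.
Local Open Scope ring_scope.


Section Mod.
Variable K : numFieldType.
Implicit Types p q a b c d G : {poly K}.

Definition eqX (N : nat) p q := exists h : {poly K}, p - q = h * 'X^N.

Lemma eqX_refl N p : eqX N p p.
Proof. by exists 0; rewrite subrr mul0r. Qed.
Lemma eqX_sym N p q : eqX N p q -> eqX N q p.
Proof. by case=> h e; exists (- h); rewrite mulNr -e opprB. Qed.
Lemma eqX_trans N p q a : eqX N p q -> eqX N q a -> eqX N p a.
Proof.
by case=> h e [h' e']; exists (h + h'); rewrite mulrDl -e -e' addrA subrK.
Qed.
Lemma eqX_add N p q a b : eqX N p q -> eqX N a b -> eqX N (p + a) (q + b).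
Proof.
case=> h e [h' e']; exists (h + h'); rewrite mulrDl -e -e'.
by rewrite opprD addrACA.
Qed.
Lemma eqX_opp N p q : eqX N p q -> eqX N (- p) (- q).
Proof. by case=> h e; exists (- h); rewrite mulNr -e opprB addrC opprK. Qed.
Lemma eqX_mull N p q a : eqX N p q -> eqX N (a * p) (a * q).
Proof. by case=> h e; exists (a * h); rewrite -mulrA -e mulrBr. Qed.
Lemma eqX_mulr N p q a : eqX N p q -> eqX N (p * a) (q * a).
Proof. by move=> E; rewrite ![_ * a]mulrC; apply: eqX_mull. Qed.
Lemma eqX_mul N p q a b : eqX N p q -> eqX N a b -> eqX N (p * a) (q * b).
Proof.
by move=> E1 E2; apply: (eqX_trans (eqX_mulr a E1)); apply: eqX_mull.
Qed.
Lemma eqX_exp N p q k : eqX N p q -> eqX N (p ^+ k) (q ^+ k).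
Proof.
move=> E; elim: k => [|k IH]; first exact: eqX_refl.
by rewrite !exprS; apply: eqX_mul.
Qed.
Lemma eqX_le M N p q : (M <= N)%N -> eqX N p q -> eqX M p q.
Proof.
move=> le [h e]; exists (h * 'X^(N - M)); rewrite e -mulrA -exprD.
by rewrite subnK.
Qed.

Lemma eqX_coef N p q n : eqX N p q -> (n < N)%N -> p`_n = q`_n.
Proof.
case=> h e lt; apply/eqP; rewrite -subr_eq0 -coefB e coefMXn lt //.
Qed.

Lemma drop_coef0 n p : (forall i, (i < n)%N -> p`_i = 0) ->
  p = drop_poly n p * 'X^n.
Proof.
move=> H; rewrite -{1}(poly_take_drop n p).
suff -> : take_poly n p = 0 by rewrite add0r.
apply/polyP => i; rewrite coef_take_poly coef0.
by case: ifP => // /H.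
Qed.

Lemma coef_eqX N p q : (forall n, (n < N)%N -> p`_n = q`_n) -> eqX N p q.
Proof.
move=> H; exists (drop_poly N (p - q)); apply: drop_coef0 => i /H.
by rewrite coefB => ->; rewrite subrr.
Qed.

Lemma comp_polyXk p q k : (p ^+ k) \Po q = (p \Po q) ^+ k.
Proof.
elim: k => [|k IH]; first by rewrite !expr0 -polyC1 comp_polyC.
by rewrite !exprS comp_polyM IH.
Qed.

Lemma eqX_compl N p q (S : {poly K}) : S`_0 = 0 -> eqX N p q -> eqX N (p \Po S) (q \Po S).
Proof.
move=> S0 [h e]; have eS : S = drop_poly 1 S * 'X.
  by rewrite -['X]expr1; apply: drop_coef0; case.
exists ((h \Po S) * drop_poly 1 S ^+ N).
rewrite -comp_polyB e comp_polyM comp_polyXk comp_polyX.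
by rewrite -mulrA -exprMn -eS.
Qed.

Lemma eqX_compr N G a b : eqX N a b -> eqX N (G \Po a) (G \Po b).
Proof.
move=> E; elim/poly_ind: G => [|G c IH].
  by rewrite !comp_poly0; apply: eqX_refl.
rewrite !comp_polyD !comp_polyM !comp_polyX !comp_polyC.
by apply: eqX_add; [apply: eqX_mul|apply: eqX_refl].
Qed.

End Mod.


Section Spec.
Variable K : numFieldType.
Variable N : nat.
Hypothesis N0 : (0 < N)%N.

Definition Up : {poly K} := 1 - 'X.
Definition Vp : {poly K} := \poly_(i < N) 1.
Definition Sp : {poly K} := 1 - Vp.

Lemma coefV n : Vp`_n = (n < N)%:R.
Proof. by rewrite coef_poly; case: ifP. Qed.

Lemma coefS n : Sp`_n = if n == 0%N then 0 else - (n < N)%:R.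
Proof.
rewrite coefB coef1 coefV; case: n => [|n] /=; first by rewrite N0 subrr.
by rewrite sub0r.
Qed.

Lemma S0 : Sp`_0 = 0.
Proof. by rewrite coefS. Qed.

Lemma UV : Up * Vp = 1 - 'X^N.
Proof.
have := subrXX (1 : {poly K}) 'X N; rewrite expr1n => ->.
congr (_ * _); rewrite /Vp poly_def; apply: eq_bigr => i _.
by rewrite expr1n mul1r scale1r.
Qed.

Lemma eqX_UV : eqX N (Up * Vp) 1.
Proof. by exists (-1); rewrite UV addrAC subrr add0r mulN1r. Qed.

Lemma eqX_UVk k : eqX N (Up ^+ k * Vp ^+ k) 1.
Proof. by rewrite -exprMn -(expr1n _ k); apply: eqX_exp; exact: eqX_UV. Qed.

Lemma comp1 (q : {poly K}) : 1 \Po q = 1.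
Proof. by rewrite -polyC1 comp_polyC. Qed.

Lemma US : Up \Po Sp = Vp.
Proof. by rewrite comp_polyB comp1 comp_polyX /Sp opprB addrC subrK. Qed.

Lemma VS : eqX N (Vp \Po Sp) Up.
Proof.
have H : Vp * (Vp \Po Sp) = 1 - Sp ^+ N.
  by rewrite -{1}US -comp_polyM UV comp_polyB comp1 comp_polyXk comp_polyX.
have H2 : eqX N (Vp * (Vp \Po Sp)) 1.
  rewrite H; have eS : Sp = drop_poly 1 Sp * 'X.
    by rewrite -['X]expr1; apply: drop_coef0; case=> // _; exact: S0.
  exists (- drop_poly 1 Sp ^+ N); rewrite addrAC subrr add0r {1}eS exprMn.
  by rewrite mulNr.
apply: (@eqX_trans _ _ _ ((Up * Vp) * (Vp \Po Sp))).
  rewrite -{1}(mul1r (Vp \Po Sp)); apply: eqX_mulr; apply: eqX_sym.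
  exact: eqX_UV.
by rewrite -mulrA -{2}(mulr1 Up); apply: eqX_mull.
Qed.

Lemma SS : eqX N (Sp \Po Sp) 'X.
Proof.
rewrite {1}/Sp comp_polyB comp1.
have -> : ('X : {poly K}) = 1 - Up by rewrite /Up opprB addrC subrK.
by apply: eqX_add; [apply: eqX_refl|apply: eqX_opp; exact: VS].
Qed.

Lemma S_XV : eqX N Sp (- ('X * Vp)).
Proof.
exists 1; rewrite mul1r opprK.
have : ('X * Vp) = Vp - Up * Vp by rewrite /Up mulrBl mul1r opprB addrC subrK.
move=> ->; rewrite UV /Sp; ring.
Qed.

Lemma coefU p j : (Up ^+ p)`_j = (-1) ^+ j * ('C(p, j))%:R.
Proof.
elim: p j => [|p IH] j.
  by rewrite expr0 coef1; case: j => [|j]; rewrite ?mul1r // bin0n mulr0.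
rewrite exprS /Up mulrBl mul1r coefB coefXM IH.
case: j => [|j] /=; first by rewrite subr0 !bin0.
rewrite IH binS natrD mulrDr exprS; ring.
Qed.

Lemma coefVk n j : (j < N)%N -> (Vp ^+ n)`_j = ('C(n + j - 1, j))%:R.
Proof.
elim: n j => [|n IH] j ltj.
  by rewrite expr0 coef1 add0n; case: j {ltj} => [|j] //=; rewrite subSS subn0 bin_small.
have E : eqX N (Up * Vp ^+ n.+1) (Vp ^+ n).
  rewrite exprS mulrA -{2}(mul1r (Vp ^+ n)); apply: eqX_mulr; exact: eqX_UV.
have R j' : (j' < N)%N -> (Vp ^+ n.+1)`_j' =
    (Vp ^+ n)`_j' + (if j' == 0%N then 0 else (Vp ^+ n.+1)`_j'.-1).
  move=> lt; rewrite -(eqX_coef E lt) /Up mulrBl mul1r coefB coefXM subrK //.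
elim: j ltj => [|j IHj] ltj.
  by rewrite R // IH // addr0 !bin0.
rewrite R //= IH // IHj ?(ltnW ltj) //.
by rewrite -natrD addnS addSn !subn1 /= addnS binS.
Qed.

End Spec.


Section Core.
Variable K : numFieldType.
Variable N : nat.
Hypothesis N0 : (0 < N)%N.
Local Notation U := (Up K).
Local Notation V := (Vp K N).
Local Notation S := (Sp K N).

Lemma coef_sign i (Q : {poly K}) j : ((-1) ^+ i * Q)`_j = (-1) ^+ i * Q`_j.
Proof.
rewrite -signr_odd -[(-1 : K) ^+ i]signr_odd.
by case: (odd i); rewrite ?expr1 ?expr0 ?mulN1r ?mul1r ?coefN.
Qed.

Lemma Spow n : eqX N (S ^+ n) ((-1) ^+ n * ('X ^+ n * V ^+ n)).
Proof. by rewrite -exprMn -exprNn; apply: eqX_exp; exact: S_XV. Qed.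

Lemma x_eq_negx (x : K) : x = - x -> x = 0.
Proof.
move=> e; have : x *+ 2 = 0 by rewrite mulr2n {1}e addNr.
by move/eqP; rewrite mulrn_eq0 /= => /eqP.
Qed.

Lemma key_mono p i : (p.*2.+1 < N)%N ->
  (U ^+ p * S ^+ i)`_(p.*2.+1) = - (U ^+ p * 'X ^+ i)`_(p.*2.+1).
Proof.
move=> ltN; set j := p.*2.+1.
have E1 : eqX N (U ^+ p * S ^+ i) ((-1) ^+ i * ('X ^+ i * (U ^+ p * V ^+ i))).
  have -> : (-1) ^+ i * ('X ^+ i * (U ^+ p * V ^+ i)) =
      U ^+ p * ((-1) ^+ i * ('X ^+ i * V ^+ i)) by ring.
  apply: eqX_mull; exact: Spow.
rewrite (eqX_coef E1 ltN) coef_sign (coefXnM i) [U ^+ p * 'X^i]mulrC (coefXnM i) -/j.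
case: ltnP => [_|leij]; first by rewrite mulr0 oppr0.
rewrite coefU.
have hj : odd j by rewrite /j /= odd_double.
have sgn : (-1) ^+ i = - (-1) ^+ (j - i) :> K.
  have h1 : (-1) ^+ (j - i) * (-1) ^+ i = - 1 :> K.
    by rewrite -exprD subnK // -signr_odd hj expr1.
  have h2 : (-1) ^+ (j - i) * (-1) ^+ (j - i) = 1 :> K.
    by rewrite -expr2 sqrr_sign.
  have -> : (-1) ^+ i = ((-1) ^+ (j - i) * (-1) ^+ (j - i)) * (-1) ^+ i :> K.
    by rewrite h2 mul1r.
  by rewrite -mulrA h1 mulrN1.
case: (leqP i p) => [leip|ltpi].
  have E2 : eqX N (U ^+ p * V ^+ i) (U ^+ (p - i)).
    rewrite -(subnK leip) exprD -mulrA subnK // -{2}(mulr1 (U ^+ (p - i))).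
    apply: eqX_mull; exact: eqX_UVk.
  have ltjN : (j - i < N)%N by apply: leq_ltn_trans (leq_subr _ _) ltN.
  rewrite (eqX_coef E2 ltjN) !coefU.
  have hd : j = (p + p).+1 by rewrite /j addnn.
  rewrite (@bin_small (p - i)); last by rewrite hd; lia.
  by rewrite (@bin_small p) ?mulr0 ?oppr0 //; rewrite hd; lia.
have E2 : eqX N (U ^+ p * V ^+ i) (V ^+ (i - p)).
  have -> : U ^+ p * V ^+ i = (U ^+ p * V ^+ p) * V ^+ (i - p).
    by rewrite -mulrA -exprD subnKC // ltnW.
  rewrite -{2}(mul1r (V ^+ (i - p))); apply: eqX_mulr; exact: eqX_UVk.
have ltjN : (j - i < N)%N by apply: leq_ltn_trans (leq_subr _ _) ltN.
rewrite (eqX_coef E2 ltjN) coefVk //.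
have -> : (i - p + (j - i) - 1 = p)%N by rewrite /j -addnn; lia.
by rewrite sgn; ring.
Qed.

Lemma key G p : (p.*2.+1 < N)%N ->
  (U ^+ p * (G \Po S))`_(p.*2.+1) = - (U ^+ p * G)`_(p.*2.+1).
Proof.
move=> ltN; have Gd : G = \sum_(i < size G) G`_i *: 'X^i by rewrite -poly_def coefK.
rewrite comp_polyE [in RHS]Gd !mulr_sumr !coef_sum -sumrN.
apply: eq_bigr => i _; rewrite -!scalerAr !coefZ key_mono //.
by rewrite mulrN.
Qed.

Lemma core G : (forall n, (n < N)%N -> (G \Po S)`_n = G`_n) <->
  (forall p, (p.*2.+1 < N)%N -> (U ^+ p * G)`_(p.*2.+1) = 0).
Proof.
split.
  move=> H p ltN; have E : eqX N (G \Po S) G by apply: coef_eqX.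
  apply: x_eq_negx; rewrite -key // (eqX_coef (eqX_mull _ E) ltN) //.
move=> H; set D := G \Po S - G.
have anti : eqX N (D \Po S) (- D).
  rewrite /D comp_polyB -comp_polyA opprB.
  apply: eqX_add; last exact: eqX_refl.
  rewrite -{2}(comp_polyXr G); apply: eqX_compr; exact: SS.
have step : forall n, (n < N)%N -> (forall i, (i < n)%N -> D`_i = 0) -> D`_n = 0.
  move=> n ltn low; set c := D`_n.
  have lowE : eqX n.+1 D (c%:P * 'X^n).
    apply: coef_eqX => i; rewrite ltnS leq_eqVlt => /orP [/eqP ->|lti].
      by rewrite coefCM coefXn eqxx mulr1.
    by rewrite coefCM coefXn (ltn_eqF lti) mulr0 low.
  case ho : (odd n).
    have hn : n = (n./2).*2.+1 by rewrite -[n in LHS]odd_double_half ho.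
    set p := n./2 in hn.
    have ltp : (p.*2.+1 < N)%N by rewrite -hn.
    have e1 : (U ^+ p * D)`_(p.*2.+1) = 0.
      by rewrite /D mulrBr coefB key // H // !oppr0 addr0.
    rewrite -hn in e1.
    have e2 : (U ^+ p * D)`_n = c.
      rewrite (eqX_coef (eqX_mull (U ^+ p) lowE) (ltnSn n)).
      rewrite mulrA [U ^+ p * _]mulrC -mulrA coefCM coefMXn ltnn subnn coefU.
      by rewrite expr0 bin0 mul1r mulr1.
    by rewrite -e2.
  have e1 : (D \Po S)`_n = - c by rewrite (eqX_coef anti ltn) coefN.
  have e2 : eqX n.+1 (D \Po S) (c%:P * S ^+ n).
    have := eqX_compl (S0 K N0) lowE.
    by rewrite comp_polyM comp_polyC comp_polyXk comp_polyX.
  have e3 : eqX n.+1 (S ^+ n) ((-1) ^+ n * ('X ^+ n * V ^+ n)).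
    exact: eqX_le ltn (Spow n).
  have := eqX_coef (eqX_trans e2 (eqX_mull _ e3)) (ltnSn n).
  rewrite e1 coefCM coef_sign (coefXnM n) ltnn subnn coefVk // addn0 bin0.
  rewrite -signr_odd ho expr0 mulr1 mulr1 => e.
  by apply: x_eq_negx; rewrite {1}e.
suff Dz : forall n, (n < N)%N -> forall i, (i <= n)%N -> D`_i = 0.
  move=> n ltn; apply/eqP; rewrite -subr_eq0 -coefB; apply/eqP.
  exact: (Dz n ltn n (leqnn n)).
elim=> [|n IH] ltn i.
  by rewrite leqn0 => /eqP ->; apply: step => // j; rewrite ltn0.
rewrite leq_eqVlt => /orP [/eqP ->|].
  apply: step => // j; rewrite ltnS; apply: IH; exact: ltnW.
rewrite ltnS; apply: IH; exact: ltnW.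
Qed.

End Core.


Section Agree.
Variable K : numFieldType.
Implicit Types f g phi s : fps K.

Definition agree N f (P : {poly K}) := forall n, (n < N)%N -> f n = P`_n.

Lemma sum_ext (F : nat -> K) a b : (a <= b)%N -> (forall i, (a <= i)%N -> F i = 0) ->
  \sum_(i < a) F i = \sum_(i < b) F i.
Proof.
move=> le H; rewrite (big_ord_widen _ _ le) big_mkcond; apply: eq_bigr => i _.
by case: ifP => // /negbT; rewrite -leqNgt => /H ->.
Qed.

Lemma agree_mul N f g P Q : agree N f P -> agree N g Q -> agree N (fps_mul f g) (P * Q).
Proof.
move=> Hf Hg n ltn; rewrite coefM /fps_mul; apply: eq_bigr => [[i /= lti]] _.
have l1 : (i < N)%N by exact: leq_trans lti ltn.
have l2 : (n - i < N)%N by exact: leq_ltn_trans (leq_subr _ _) ltn.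
by rewrite Hf // Hg.
Qed.

Lemma agree_const N c : agree N (fps_const c) c%:P.
Proof. by move=> [|n] _; rewrite coefC. Qed.

Lemma agree_pow N f P k : agree N f P -> agree N (fps_pow f k) (P ^+ k).
Proof.
move=> H; elim: k => [|k IH]; first by rewrite expr0 -polyC1; apply: agree_const.
by rewrite exprS; apply: agree_mul.
Qed.

Lemma agree_comp N phi s P S : agree N phi P -> agree N s S -> S`_0 = 0 ->
  agree N (fps_comp phi s) (P \Po S).
Proof.
move=> Hp Hs S0 n ltn; rewrite coef_comp_poly /fps_comp.
have eS : S = drop_poly 1 S * 'X.
  by rewrite -['X]expr1; apply: drop_coef0; case.
have Z : forall i, (n < i)%N -> (S ^+ i)`_n = 0.
  by move=> i lti; rewrite eS exprMn coefMXn lti.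
transitivity (\sum_(i < n.+1) P`_i * (S ^+ i)`_n).
  apply: eq_bigr => [[i /= lti]] _; rewrite Hp ?(agree_pow i Hs) //.
  exact: leq_trans lti ltn.
rewrite (@sum_ext (fun i => P`_i * (S ^+ i)`_n) n.+1 (n.+1 + size P)) ?leq_addr //.
  rewrite [RHS](@sum_ext (fun i => P`_i * (S ^+ i)`_n) (size P) (n.+1 + size P)) ?leq_addl //.
  by move=> i le; rewrite nth_default // mul0r.
by move=> i le; rewrite Z ?mulr0.
Qed.

Lemma agree_omx N : agree N (one_minus_X K) (Up K).
Proof.
move=> n _; rewrite /one_minus_X /fps_add /Up coefB coef1 coefX /fps_X /fps_const.
by case: n => [|[|n]] //=; rewrite ?subr0 ?sub0r ?subrr ?add0r ?addr0.
Qed.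

Lemma s_val s : fps_mul (X_minus_one K) s = fps_X K -> forall n, s n = if n is 0 then 0 else -1.
Proof.
move=> H.
have X0 : X_minus_one K 0 = -1 by rewrite /X_minus_one /fps_add /fps_X /fps_const add0r.
have X1 : X_minus_one K 1 = 1 by rewrite /X_minus_one /fps_add /fps_X /fps_const addr0.
have X2 : forall i, X_minus_one K i.+2 = 0.
  by move=> i; rewrite /X_minus_one /fps_add /fps_X /fps_const addr0.
have h0 : s 0 = 0.
  have := congr1 (fun f => f 0%N) H; rewrite /fps_mul big_ord1 X0 /fps_X /= mulN1r.
  by move/eqP; rewrite oppr_eq0 => /eqP.
have hS : forall k, s k.+1 = s k - (k == 0)%:R.
  move=> k; have := congr1 (fun f => f k.+1) H.
  rewrite /fps_mul 2!big_ord_recl big1 => [|i _]; last by rewrite /= X2 mul0r.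
  rewrite /= X0 X1 /fps_X /= addr0 subn0 /bump /= subSS subn0 mul1r mulN1r => e.
  have -> : (k == 0)%:R = - s k.+1 + s k :> K by rewrite e; case: k {e}.
  ring.
case=> // k; elim: k => [|k IH]; first by rewrite hS h0 /= sub0r.
by rewrite hS IH /= subr0.
Qed.

Lemma agree_s N s : (0 < N)%N -> fps_mul (X_minus_one K) s = fps_X K -> agree N s (Sp K N).
Proof.
move=> N0 H n ltn; rewrite (s_val H) coefS //; case: n ltn => // n ->.
by [].
Qed.

Lemma coefz_lt0 phi z : z < 0 -> coefz phi z = 0.
Proof. by case: z. Qed.

Lemma coefz_sub phi n j : (j <= n)%N -> coefz phi (n%:Z - j%:Z) = phi (n - j)%N.
Proof. by move=> le; rewrite subzn. Qed.

Lemma coefz_sub0 phi n j : (n < j)%N -> coefz phi (n%:Z - j%:Z) = 0.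
Proof. by move=> lt; apply: coefz_lt0; rewrite subr_lt0 ltz_nat. Qed.

Lemma cM_coef N phi P p n (r : int) : (n < N)%N -> agree N phi P ->
  n%:Z = (p.*2.+1)%:Z - r ->
  \sum_(i < p.+1) (-1) ^+ i * ('C(p, i))%:R * coefz phi ((p.+1)%:Z - r + i%:Z) =
  (-1) ^+ p * (Up K ^+ p * P)`_n.
Proof.
move=> ltn Hp hr.
pose F j := (-1) ^+ j * ('C(p, j))%:R * coefz phi (n%:Z - j%:Z).
have E1 : (Up K ^+ p * P)`_n = \sum_(j < n.+1) F j.
  rewrite coefM; apply: eq_bigr => [[j /= ltj]] _; rewrite coefU /F coefz_sub //.
  by rewrite Hp //; apply: leq_ltn_trans (leq_subr _ _) ltn.
have E2 : \sum_(j < n.+1) F j = \sum_(j < n.+1 + p.+1) F j.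
  apply: sum_ext; first exact: leq_addr.
  by move=> i le; rewrite /F coefz_sub0 ?mulr0.
have E3 : \sum_(j < p.+1) F j = \sum_(j < n.+1 + p.+1) F j.
  apply: sum_ext; first exact: leq_addl.
  by move=> i le; rewrite /F bin_small ?mulr0 ?mul0r.
rewrite E1 E2 -E3 mulr_sumr (reindex_inj rev_ord_inj) /=; apply: eq_bigr => [[j /= ltj]] _.
rewrite /F subSS bin_sub //.
have -> : (p.+1)%:Z - r + (p - j)%N%:Z = n%:Z - j%:Z.
  rewrite hr; rewrite -subzn //; lia.
rewrite !mulrA; congr (_ * _ * _).
by rewrite -{2}(@subnK j p) // exprD -mulrA -expr2 sqrr_sign mulr1.
Qed.

End Agree.


Section Main.
Variable K : numFieldType.
Variable phi : fps K.

Definition Pn N : {poly K} := \poly_(i < N) phi i.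
Lemma agreeP N : agree N phi (Pn N).
Proof. by move=> n ltn; rewrite coef_poly ltn. Qed.

Definition s0 : fps K := fun n => if n is 0 then 0 else -1.

Lemma s0_ok : fps_mul (X_minus_one K) s0 = fps_X K.
Proof.
have X0 : X_minus_one K 0 = -1 by rewrite /X_minus_one /fps_add /fps_X /fps_const add0r.
have X1 : X_minus_one K 1 = 1 by rewrite /X_minus_one /fps_add /fps_X /fps_const addr0.
have X2 : forall i, X_minus_one K i.+2 = 0.
  by move=> i; rewrite /X_minus_one /fps_add /fps_X /fps_const addr0.
apply: functional_extensionality => -[|k].
  by rewrite /fps_mul big_ord1 X0 /fps_X /= mulr0.
rewrite /fps_mul 2!big_ord_recl big1 => [|i _]; last by rewrite /= X2 mul0r.
rewrite /= X0 X1 /fps_X /= /bump /= subSS subn0 mul1r addr0.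
by case: k => [|k] /=; rewrite mulrNN mulr1 ?addr0 // subrr.
Qed.

Definition Ccond (r : int) := forall m : nat, (0 < m)%N ->
      \sum_(i < m) (-1) ^+ i * ('C(m.-1, i))%:R * coefz phi (m%:Z - r + i%:Z) = 0.

Lemma inF_pos k : in_F (k.*2)%:Z phi <->
  forall N, (0 < N)%N -> eqX N (Pn N \Po Sp K N) (Up K ^+ (k.*2) * Pn N).
Proof.
rewrite /in_F; have -> : (0 <= (k.*2)%:Z) = true by [].
split.
  move=> H N N0; apply: coef_eqX => n ltn; have e := H s0 s0_ok.
  rewrite -(agree_comp (@agreeP N) (agree_s N0 s0_ok) (S0 K N0)) //.
  rewrite -(agree_mul (agree_pow (k.*2) (@agree_omx K N)) (@agreeP N)) //.
  by rewrite e.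
move=> H s hs; apply: functional_extensionality => n.
have N0 : (0 < n.+1)%N by [].
rewrite (agree_comp (@agreeP n.+1) (agree_s N0 hs) (S0 K N0)) //.
rewrite (agree_mul (agree_pow (k.*2) (@agree_omx K n.+1)) (@agreeP n.+1)) //.
exact: eqX_coef (H _ N0) _.
Qed.

Lemma inF_neg k : (0 < k)%N -> in_F (- (k.*2)%:Z) phi <->
  forall N, (0 < N)%N -> eqX N (Up K ^+ (k.*2) * (Pn N \Po Sp K N)) (Pn N).
Proof.
move=> k0; rewrite /in_F.
have -> : (0 <= - (k.*2)%:Z) = false by rewrite oppr_ge0 lez_nat leqn0; lia.
have -> : `|- (k.*2)%:Z|%N = k.*2 by rewrite abszN.
split.
  move=> H N N0; apply: coef_eqX => n ltn; have e := H s0 s0_ok.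
  rewrite -(agree_mul (agree_pow (k.*2) (@agree_omx K N))
     (agree_comp (@agreeP N) (agree_s N0 s0_ok) (S0 K N0))) //.
  by rewrite e -(@agreeP N).
move=> H s hs; apply: functional_extensionality => n.
have N0 : (0 < n.+1)%N by [].
rewrite (agree_mul (agree_pow (k.*2) (@agree_omx K n.+1))
     (agree_comp (@agreeP n.+1) (agree_s N0 hs) (S0 K N0))) //.
rewrite (@agreeP n.+1) //.
exact: eqX_coef (H _ N0) _.
Qed.

Lemma Gpos N k (Q : {poly K}) : (0 < N)%N ->
  eqX N (Q \Po Sp K N) (Up K ^+ (k.*2) * Q) <->
  eqX N ((Up K ^+ k * Q) \Po Sp K N) (Up K ^+ k * Q).
Proof.
move=> N0; rewrite comp_polyM comp_polyXk US -addnn exprD.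
split=> E.
  apply: (eqX_trans (eqX_mull _ E)).
  have -> : Vp K N ^+ k * (Up K ^+ k * Up K ^+ k * Q) =
    (Up K ^+ k * Vp K N ^+ k) * (Up K ^+ k * Q) by ring.
  rewrite -{2}(mul1r (Up K ^+ k * Q)); apply: eqX_mulr; exact: eqX_UVk.
apply: (@eqX_trans _ _ _ ((Up K ^+ k * Vp K N ^+ k) * (Q \Po Sp K N))).
  rewrite -{1}(mul1r (Q \Po Sp K N)); apply: eqX_mulr; apply: eqX_sym; exact: eqX_UVk.
by rewrite -mulrA -[_ * _ * Q]mulrA; apply: eqX_mull.
Qed.

Lemma Gneg N k (Q : {poly K}) : (0 < N)%N ->
  eqX N (Up K ^+ (k.*2) * (Q \Po Sp K N)) Q <->
  eqX N ((Vp K N ^+ k * Q) \Po Sp K N) (Vp K N ^+ k * Q).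
Proof.
move=> N0; rewrite comp_polyM comp_polyXk -addnn exprD.
have E0 : eqX N ((Vp K N \Po Sp K N) ^+ k * (Q \Po Sp K N)) (Up K ^+ k * (Q \Po Sp K N)).
  by apply: eqX_mulr; apply: eqX_exp; exact: VS.
split=> E.
  apply: (eqX_trans E0).
  apply: (@eqX_trans _ _ _ ((Vp K N ^+ k * Up K ^+ k) * (Up K ^+ k * (Q \Po Sp K N)))).
    rewrite -{1}(mul1r (_ * (Q \Po _))); apply: eqX_mulr; apply: eqX_sym.
    by rewrite mulrC; exact: eqX_UVk.
  have -> : Vp K N ^+ k * Up K ^+ k * (Up K ^+ k * (Q \Po Sp K N)) =
    Vp K N ^+ k * (Up K ^+ k * Up K ^+ k * (Q \Po Sp K N)) by ring.
  exact: eqX_mull.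
have E1 := eqX_trans (eqX_sym E0) E.
apply: (@eqX_trans _ _ _ (Up K ^+ k * (Vp K N ^+ k * Q))).
  by rewrite -mulrA; apply: eqX_mull.
rewrite mulrA -{2}(mul1r Q); apply: eqX_mulr; exact: eqX_UVk.
Qed.

Lemma core_eqX N (G : {poly K}) : (0 < N)%N ->
  eqX N (G \Po Sp K N) G <->
  (forall p, (p.*2.+1 < N)%N -> (Up K ^+ p * G)`_(p.*2.+1) = 0).
Proof.
move=> N0; rewrite -core //; split; first by move=> E n; exact: eqX_coef.
exact: coef_eqX.
Qed.


Lemma sign_mul0 p (x : K) : (-1) ^+ p * x = 0 -> x = 0.
Proof. by move/eqP; rewrite mulf_eq0 signr_eq0 /= => /eqP. Qed.

Lemma Cpos k : Ccond (k.*2)%:Z <->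
  forall N, (0 < N)%N -> forall p, (p.*2.+1 < N)%N ->
    (Up K ^+ p * (Up K ^+ k * Pn N))`_(p.*2.+1) = 0.
Proof.
split.
  move=> H N N0 p ltp; rewrite mulrA -exprD.
  apply: (@sign_mul0 (p + k)); rewrite -(cM_coef (r := (k.*2)%:Z) ltp (@agreeP N)).
    exact: (H (p + k).+1).
  rewrite -!muln2; lia.
move=> H [//|p'] _ /=; case: (ltnP p' k) => [lt|le].
  rewrite big1 // => i _; rewrite coefz_lt0 ?mulr0 //.
  have := ltn_ord i; rewrite -!muln2; lia.
set p := (p' - k)%N; have ltp : (p.*2.+1 < p.*2.+2)%N by [].
have := H _ (ltn0Sn _) p ltp; rewrite mulrA -exprD subnK //.
rewrite (cM_coef (r := (k.*2)%:Z) ltp (@agreeP _)) => [->|]; first by rewrite mulr0.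
rewrite /p -!muln2; lia.
Qed.

Lemma Cneg k : (0 < k)%N -> (forall i : nat, (i <= k.*2)%N -> phi i = 0) ->
  Ccond (- (k.*2)%:Z) <->
  forall N, (0 < N)%N -> forall p, (p.*2.+1 < N)%N ->
    (Up K ^+ p * (Vp K N ^+ k * Pn N))`_(p.*2.+1) = 0.
Proof.
move=> k0 hz.
have red N p : (0 < N)%N -> (k <= p)%N -> (p.*2.+1 < N)%N ->
    (Up K ^+ p * (Vp K N ^+ k * Pn N))`_(p.*2.+1) =
    (Up K ^+ (p - k) * Pn N)`_(p.*2.+1).
  move=> N0 le ltp; apply: eqX_coef ltp; rewrite mulrA.
  have -> : Up K ^+ p * Vp K N ^+ k = Up K ^+ (p - k) * (Up K ^+ k * Vp K N ^+ k).
    by rewrite mulrA -exprD subnK.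
  apply: eqX_mulr; rewrite -{2}(mulr1 (Up K ^+ (p - k))); apply: eqX_mull.
  exact: eqX_UVk.
split.
  move=> H N N0 p ltp; case: (leqP k p) => [le|lt].
    rewrite red //; apply: (@sign_mul0 (p - k)).
    rewrite -(cM_coef (r := - (k.*2)%:Z) ltp (@agreeP N)).
      exact: (H (p - k).+1).
    rewrite -!muln2; lia.
  rewrite mulrA coefM big1 // => i _.
  rewrite -(@agreeP N) ?hz ?mulr0 //.
    apply: leq_trans (leq_subr _ _) _; rewrite -!muln2 in lt *; lia.
  exact: leq_ltn_trans (leq_subr _ _) ltp.
move=> H [//|p'] _ /=.
set p := (p' + k)%N; have ltp : (p.*2.+1 < p.*2.+2)%N by [].
have := H _ (ltn0Sn _) p ltp; rewrite red ?leq_addl // /p addnK.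
rewrite (cM_coef (r := - (k.*2)%:Z) ltp (@agreeP _)) => [->|]; first by rewrite mulr0.
rewrite /p -!muln2; lia.
Qed.

End Main.

Unset Implicit Arguments.

Theorem corollary4p2 (K : numFieldType) (phi : fps K) (r : int) :
  (2 %| r)%Z ->
  (r < 0 -> forall i : nat, (i%:Z <= - r) -> phi i = 0) ->
  ((forall m : nat, (0 < m)%N ->
      \sum_(i < m) (-1) ^+ i * ('C(m.-1, i))%:R * coefz phi (m%:Z - r + i%:Z) = 0)
   <-> in_F r phi).
Proof.
move=> hd hz.
have h2 : (2 %| `|r|)%N by exact: hd.
have hk : `|r|%N = (`|r|%N./2).*2.
  by rewrite -[LHS]odd_double_half; move: h2; rewrite dvdn2 => /negbTE ->.
set k := (`|r|%N./2) in hk; clearbody k.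
case: r hd hz hk h2 => n hd hz hk _.
  rewrite /= in hk; subst n.
  change (Ccond phi (k.*2)%:Z <-> in_F (k.*2)%:Z phi).
  rewrite Cpos inF_pos; split=> H N N0.
    apply/(Gpos k (Pn phi N) N0); apply/(core_eqX (Up K ^+ k * Pn phi N) N0); exact: H.
  apply/(core_eqX (Up K ^+ k * Pn phi N) N0); apply/(Gpos k (Pn phi N) N0); exact: H.
have k0 : (0 < k)%N by move: hk => /= hk; rewrite lt0n; apply/eqP => e; rewrite e in hk.
have er : Negz n = - (k.*2)%:Z by rewrite NegzE -hk.
rewrite er in hz *.
have hz' : forall i : nat, (i <= k.*2)%N -> phi i = 0.
  by move=> i le; apply: hz; [rewrite oppr_lt0 ltz_nat double_gt0 | rewrite opprK lez_nat].
change (Ccond phi (- (k.*2)%:Z) <-> in_F (- (k.*2)%:Z) phi).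
rewrite (Cneg k0 hz') (inF_neg _ k0); split=> H N N0.
  apply/(Gneg k (Pn phi N) N0); apply/(core_eqX (Vp K N ^+ k * Pn phi N) N0); exact: H.
apply/(core_eqX (Vp K N ^+ k * Pn phi N) N0); apply/(Gneg k (Pn phi N) N0); exact: H.
Qed.
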